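(* Let $D_1\subset\mathbb{R}^2$ be an open disc centered at the origin and let $\mathbf{f}=(f_1,f_2)$ be a vector field on $\mathbb{R}^2$ with $f_1,f_2\in C^2_c(D_1)$. Let $\boldsymbol{\gamma}_1,\dots,\boldsymbol{\gamma}_m$ be distinct unit vectors in $\mathbb{R}^2$ and $c_1,\dots,c_m$ nonzero real numbers, and let $\mathcal{S}\mathbf{f}$ be the corresponding vector-valued star transform. For $\boldsymbol{\psi}\in\mathbb{S}^1\setminus(\mathcal{Z}_1\cup\mathcal{Z}_2)$ let $$Q(\boldsymbol{\psi})=\begin{bmatrix}\boldsymbol{\gamma}(\boldsymbol{\psi})\\ \boldsymbol{\gamma}(\boldsymbol{\psi})^\perp\end{bmatrix}^{-1}\in GL(2,\mathbb{R}),$$ the inverse of the $2\times 2$ matrix whose rows are $\boldsymbol{\gamma}(\boldsymbol{\psi})$ and $\boldsymbol{\gamma}(\boldsymbol{\psi})^\perp$. Then for every $\boldsymbol{\psi}\in\mathbb{S}^1\setminus(\mathcal{Z}_1\cup\mathcal{Z}_2)$ and every $s\in\mathbb{R}$, $$Q(\boldsymbol{\psi})\,\frac{d}{ds}\mathcal{R}(\mathcal{S}\mathbf{f})(\boldsymbol{\psi},s)=\mathcal{R}\mathbf{f}(\boldsymbol{\psi},s),$$ where $\mathcal{R}$ is applied componentwise to vector-valued functions.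
   Context: For $\mathbf{x}=(x_1,x_2)$ set $\mathbf{x}^\perp=(-x_2,x_1)$. For a unit vector $\boldsymbol{\gamma}$, $\mathcal{X}_{\boldsymbol{\gamma}}h(\mathbf{x})=\int_0^\infty h(\mathbf{x}+t\boldsymbol{\gamma})\,dt$ (applied componentwise to vectors). The vector-valued star transform is $\mathcal{S}\mathbf{f}=\sum_{i=1}^m c_i\,\mathcal{X}_{\boldsymbol{\gamma}_i}\begin{bmatrix}\mathbf{f}\cdot\boldsymbol{\gamma}_i\\ \mathbf{f}\cdot\boldsymbol{\gamma}_i^\perp\end{bmatrix}$, an $\mathbb{R}^2$-valued function on $\mathbb{R}^2$. $\mathcal{R}h(\boldsymbol{\psi},s)=\int_{\mathbb{R}}h(s\boldsymbol{\psi}+t\boldsymbol{\psi}^\perp)\,dt$ is the Radon transform of a scalar function $h$ over the line $\{\mathbf{x}:\mathbf{x}\cdot\boldsymbol{\psi}=s\}$, $\boldsymbol{\psi}\in\mathbb{S}^1$, $s\in\mathbb{R}$. The set of singular directions of type 1 is $\mathcal{Z}_1=\bigcup_{i=1}^m\{\boldsymbol{\psi}\in\mathbb{S}^1:\boldsymbol{\psi}\cdot\boldsymbol{\gamma}_i=0\}$. For $\boldsymbol{\psi}\in\mathbb{S}^1\setminus\mathcal{Z}_1$ define $\boldsymbol{\gamma}(\boldsymbol{\psi})=-\sum_{i=1}^m\frac{c_i\boldsymbol{\gamma}_i}{\boldsymbol{\psi}\cdot\boldsymbol{\gamma}_i}\in\mathbb{R}^2$, and the set of singular directions of type 2 is $\mathcal{Z}_2=\{\boldsymbol{\psi}\in\mathbb{S}^1\setminus\mathcal{Z}_1:\boldsymbol{\gamma}(\boldsymbol{\psi})=0\}$.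 *)

(* Defs.v *)
From Stdlib Require Import Reals.
From Coquelicot Require Import Coquelicot.
Open Scope R_scope.

Definition vadd (x y : R * R) : R * R := (fst x + fst y, snd x + snd y).
Definition vscal (a : R) (x : R * R) : R * R := (a * fst x, a * snd x).
Definition dot (x y : R * R) : R := fst x * fst y + snd x * snd y.
Definition perp (x : R * R) : R * R := (- snd x, fst x).
Definition vnorm (x : R * R) : R := sqrt (dot x x).
Definition is_unit (x : R * R) : Prop := dot x x = 1.

Fixpoint sumR (m : nat) (F : nat -> R) : R :=
  match m with O => 0 | S k => sumR k F + F k end.
Fixpoint vsum (m : nat) (F : nat -> R * R) : R * R :=
  match m with O => (0, 0) | S k => vadd (vsum k F) (F k) end.

Definition partial1 (h : R * R -> R) (p : R * R) : R :=
  Derive (fun t => h (t, snd p)) (fst p).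
Definition partial2 (h : R * R -> R) (p : R * R) : R :=
  Derive (fun t => h (fst p, t)) (snd p).
Definition C1 (h : R * R -> R) : Prop :=
  (forall p : R * R,
      ex_derive (fun t => h (t, snd p)) (fst p) /\
      ex_derive (fun t => h (fst p, t)) (snd p)) /\
  (forall p : R * R,
      continuous h p /\ continuous (partial1 h) p /\ continuous (partial2 h) p).
Definition C2 (h : R * R -> R) : Prop :=
  C1 h /\ C1 (partial1 h) /\ C1 (partial2 h).

(* h in C^2_c(D_1), D_1 = open disc of radius rho centered at the origin:
   h is C^2 and its (closed) support is a compact subset of D_1, i.e.
   h vanishes outside some closed disc of radius r < rho. *)
Definition C2c_disc (rho : R) (h : R * R -> R) : Prop :=
  C2 h /\ exists r : R, r < rho /\ forall x : R * R, r < vnorm x -> h x = 0.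

Definition Xray (gam : R * R) (h : R * R -> R) (x : R * R) : R :=
  RInt_gen (fun t => h (vadd x (vscal t gam))) (at_point 0) (Rbar_locally p_infty).

Definition Radon (h : R * R -> R) (psi : R * R) (s : R) : R :=
  RInt_gen (fun t => h (vadd (vscal s psi) (vscal t (perp psi))))
           (Rbar_locally m_infty) (Rbar_locally p_infty).

Definition star (m : nat) (c : nat -> R) (gam : nat -> R * R)
    (f : R * R -> R * R) (x : R * R) : R * R :=
  vsum m (fun i =>
    vscal (c i)
      (Xray (gam i) (fun y => dot (f y) (gam i)) x,
       Xray (gam i) (fun y => dot (f y) (perp (gam i))) x)).

Definition RadonV (F : R * R -> R * R) (psi : R * R) (s : R) : R * R :=
  (Radon (fun y => fst (F y)) psi s, Radon (fun y => snd (F y)) psi s).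

Definition in_Z1 (m : nat) (gam : nat -> R * R) (psi : R * R) : Prop :=
  exists i, (i < m)%nat /\ dot psi (gam i) = 0.

Definition gamma_psi (m : nat) (c : nat -> R) (gam : nat -> R * R)
    (psi : R * R) : R * R :=
  vscal (-1) (vsum m (fun i => vscal (c i / dot psi (gam i)) (gam i))).

Definition in_Z2 (m : nat) (c : nat -> R) (gam : nat -> R * R) (psi : R * R) : Prop :=
  ~ in_Z1 m gam psi /\ gamma_psi m c gam psi = (0, 0).

(* ---- 2x2 matrices: ((a, b), (c, d)) = rows (a b) and (c d) *)
Definition mat2 := ((R * R) * (R * R))%type.
Definition mat2_of_rows (r1 r2 : R * R) : mat2 := (r1, r2).
Definition det2 (M : mat2) : R :=
  fst (fst M) * snd (snd M) - snd (fst M) * fst (snd M).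
Definition inv2 (M : mat2) : mat2 :=
  let a := fst (fst M) in let b := snd (fst M) in
  let c := fst (snd M) in let d := snd (snd M) in
  let k := / det2 M in
  ((k * d, - (k * b)), (- (k * c), k * a)).
Definition mulmv (M : mat2) (v : R * R) : R * R := (dot (fst M) v, dot (snd M) v).

Definition Qmat (m : nat) (c : nat -> R) (gam : nat -> R * R) (psi : R * R) : mat2 :=
  inv2 (mat2_of_rows (gamma_psi m c gam psi) (perp (gamma_psi m c gam psi))).

(* Main.v *)
Require Import Defs.
From Stdlib Require Import Reals Lra Classical ClassicalEpsilon FunctionalExtensionality.
From Coquelicot Require Import Coquelicot.
Open Scope R_scope.

Lemma gen_of_eventually (f : R -> R) (Fa Fb : (R -> Prop) -> Prop)
  {FFa : Filter Fa} {FFb : Filter Fb} (l : R) (Pa Pb : R -> Prop) :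
  Fa Pa -> Fb Pb -> (forall x y, Pa x -> Pb y -> is_RInt f x y l) ->
  is_RInt_gen f Fa Fb l.
Proof.
  intros HA HB H P HP.
  unfold filtermapi. simpl.
  apply Filter_prod with Pa Pb; auto.
  intros x y Hx Hy. exists l. split. apply H; auto.
  apply locally_singleton; exact HP.
Qed.

Lemma cont_ex_RInt (f : R -> R) (Hc : forall t, continuous f t) a b : ex_RInt f a b.
Proof. apply (ex_RInt_continuous (V:=R_CompleteNormedModule)). intros; apply Hc. Qed.

Lemma RInt_zero_ext (f : R -> R) a b :
  (forall t, Rmin a b < t < Rmax a b -> f t = 0) -> RInt f a b = 0.
Proof.
  intros H. rewrite (RInt_ext f (fun _ => 0)) by exact H.
  rewrite RInt_const. unfold scal; simpl; unfold mult; simpl; ring.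
Qed.

Lemma zero_outside_RInt (f : R -> R) (A B : R) (Hc : forall t, continuous f t)
  (Hz : forall t, t < A \/ B < t -> f t = 0) x y :
  A <= B -> x <= A -> B <= y -> RInt f x y = RInt f A B.
Proof.
  intros HAB HxA HBy.
  rewrite <- (RInt_Chasles f x A y) by apply cont_ex_RInt, Hc.
  rewrite <- (RInt_Chasles f A B y) by apply cont_ex_RInt, Hc.
  rewrite (RInt_zero_ext f x A).
  rewrite (RInt_zero_ext f B y).
  change (0 + (RInt f A B + 0) = RInt f A B). ring.
  intros t Ht. apply Hz. right. rewrite Rmin_left in Ht by lra. lra.
  intros t Ht. apply Hz. left. rewrite Rmax_right in Ht by lra. lra.
Qed.

Lemma I_val (f : R -> R) (A B : R) (Hc : forall t, continuous f t)
  (Hz : forall t, t < A \/ B < t -> f t = 0) :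
  A <= B ->
  is_RInt_gen f (Rbar_locally m_infty) (Rbar_locally p_infty) (RInt f A B).
Proof.
  intros HAB.
  refine (gen_of_eventually f _ _ _ (fun x => x < A) (fun y => B < y) _ _ _).
  - exists A; auto.
  - exists B; auto.
  -
  intros x y Hx Hy.
  rewrite <- (zero_outside_RInt f A B Hc Hz x y) by lra.
  apply (RInt_correct (V:=R_CompleteNormedModule)), cont_ex_RInt, Hc.
Qed.

Lemma I_val_eq (f : R -> R) (A B : R) (Hc : forall t, continuous f t)
  (Hz : forall t, t < A \/ B < t -> f t = 0) :
  A <= B ->
  RInt_gen f (Rbar_locally m_infty) (Rbar_locally p_infty) = RInt f A B.
Proof. intros; apply is_RInt_gen_unique, I_val; auto. Qed.

Lemma I0_val (f : R -> R) (B : R) (Hc : forall t, continuous f t)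
  (Hz : forall t, B < t -> f t = 0) :
  0 <= B ->
  RInt_gen f (at_point 0) (Rbar_locally p_infty) = RInt f 0 B.
Proof.
  intros HB. apply is_RInt_gen_unique.
  refine (gen_of_eventually f _ _ _ (fun x => x = 0) (fun y => B < y) _ _ _).
  - reflexivity.
  - exists B; auto.
  -
  intros x y -> Hy.
  replace (RInt f 0 B) with (RInt f 0 y).
  apply (RInt_correct (V:=R_CompleteNormedModule)), cont_ex_RInt, Hc.
  rewrite <- (RInt_Chasles f 0 B y) by apply cont_ex_RInt, Hc.
  rewrite (RInt_zero_ext f B y). change (RInt f 0 B + 0 = RInt f 0 B). ring.
  intros t Ht. apply Hz. rewrite Rmin_left in Ht by lra. lra.
Qed.
Lemma ballR (x : R) (e : R) (y : R) : @ball R_UniformSpace x e y <-> Rabs (y - x) < e.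
Proof. reflexivity. Qed.

Lemma cont_affine2 (c0 c1 c2 : R) (z : R * R) :
  continuous (fun z : R * R => c0 + c1 * fst z + c2 * snd z) z.
Proof.
  destruct z as [x y].
  apply (continuous_plus (fun z : R * R => c0 + c1 * fst z) (fun z : R*R => c2 * snd z)).
  apply (continuous_plus (fun z : R * R => c0) (fun z : R*R => c1 * fst z)).
  apply continuous_const.
  apply (continuous_mult (fun z : R * R => c1) (fun z : R*R => fst z)).
  apply continuous_const. apply continuous_fst.
  apply (continuous_mult (fun z : R * R => c2) (fun z : R*R => snd z)).
  apply continuous_const. apply continuous_snd.
Qed.

Lemma c2d_comp_affine (k : R -> R -> R) (Hk : forall u v, continuity_2d_pt k u v)
  c0 c1 c2 d0 d1 d2 x y :
  continuity_2d_pt (fun x y => k (c0 + c1*x + c2*y) (d0 + d1*x + d2*y)) x y.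
Proof.
  apply continuity_2d_pt_filterlim.
  apply (continuous_comp_2 (fun z : R * R => c0 + c1 * fst z + c2 * snd z)
     (fun z : R * R => d0 + d1 * fst z + d2 * snd z) k).
  apply cont_affine2. apply cont_affine2.
  apply continuity_2d_pt_filterlim. apply Hk.
Qed.

Lemma c2d_slice2 F x y : continuity_2d_pt F x y -> continuous (fun v => F x v) y.
Proof.
  intros H. apply (continuous_comp_2 (fun _ : R => x) (fun v : R => v) F).
  apply continuous_const. apply continuous_id.
  apply continuity_2d_pt_filterlim. exact H.
Qed.

Lemma c2d_slice1 F x y : continuity_2d_pt F x y -> continuous (fun u => F u y) x.
Proof.
  intros H. apply (continuous_comp_2 (fun u : R => u) (fun _ : R => y) F).
  apply continuous_id. apply continuous_const.
  apply continuity_2d_pt_filterlim. exact H.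
Qed.



Lemma PC_le (k2 : R -> R -> R) (Hk : forall t s, continuity_2d_pt k2 t s) a b t0 :
  a <= b -> continuous (fun t => RInt (k2 t) a b) t0.
Proof.
  intros Hab.
  apply (filterlim_locally (F:=locally t0)).
  intros eps.
  assert (He : 0 < eps / (2 * (b - a + 1))).
  { apply Rdiv_lt_0_compat. apply cond_pos. lra. }
  set (e' := mkposreal _ He).
  set (delta := fun s => proj1_sig (constructive_indefinite_description _ (Hk t0 s e'))).
  assert (Hdelta : forall s u v, Rabs (u - t0) < delta s -> Rabs (v - s) < delta s ->
             Rabs (k2 u v - k2 t0 s) < e').
  { intros s. unfold delta. destruct constructive_indefinite_description as [d Hd]. simpl.
    exact Hd. }
  destruct (compactness_value_1d a b delta) as [d Hd].
  exists d. intros t Ht. change (Rabs (t - t0) < d) in Ht. apply ballR.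
  assert (Hpt : forall s, a <= s <= b -> Rabs (k2 t s - k2 t0 s) <= 2 * e').
  { intros s Hs. apply NNPP. intros Hn. apply (Hd s Hs). intros [u [Hu [H1 H2]]].
    apply Hn.
    assert (A0 : Rabs (t - t0) < delta u) by lra. assert (A1 := Hdelta u t s A0 H1).
    assert (A2 := Hdelta u t0 s ltac:(rewrite Rminus_diag, Rabs_R0; apply cond_pos) H1).
    assert (E : k2 t s - k2 t0 s = (k2 t s - k2 t0 u) - (k2 t0 s - k2 t0 u)) by ring.
    rewrite E. eapply Rle_trans. apply Rabs_triang. rewrite Rabs_Ropp. lra. }
  assert (Ex : forall t, ex_RInt (k2 t) a b).
  { intros t'. apply cont_ex_RInt. intros s. apply c2d_slice2. apply Hk. }
  replace (RInt (k2 t) a b - RInt (k2 t0) a b)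
    with (RInt (fun s => k2 t s - k2 t0 s) a b).
  eapply Rle_lt_trans. apply abs_RInt_le_const. exact Hab.
  apply (ex_RInt_minus (V:=R_NormedModule)); auto. exact Hpt.
  simpl. apply Rle_lt_trans with ((b - a) * (eps / (b - a + 1))).
  apply Req_le. field. lra.
  rewrite <- (Rmult_1_r eps) at 2.
  unfold Rdiv. rewrite <- Rmult_assoc, (Rmult_comm (b - a)), Rmult_assoc.
  apply Rmult_lt_compat_l. apply cond_pos.
  apply Rmult_lt_reg_r with (b - a + 1). lra.
  rewrite Rmult_assoc, Rinv_l by lra. lra.
  apply (RInt_minus (V:=R_CompleteNormedModule)); auto.
Qed.

Lemma PC (k2 : R -> R -> R) (Hk : forall t s, continuity_2d_pt k2 t s) a b t0 :
  continuous (fun t => RInt (k2 t) a b) t0.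
Proof.
  destruct (Rle_dec a b). apply PC_le; auto.
  apply (continuous_ext (fun t => opp (RInt (k2 t) b a))).
  { intros t. rewrite (opp_RInt_swap (V:=R_CompleteNormedModule)). reflexivity.
    apply cont_ex_RInt. intros s. apply c2d_slice2. apply Hk. }
  apply (continuous_opp (fun t => RInt (k2 t) b a)). apply PC_le; auto. lra.
Qed.


Definition CS (f : R -> R) (K : R) : Prop :=
  (forall t, continuous f t) /\ 0 <= K /\ (forall t, K < Rabs t -> f t = 0).

Definition Ig (f : R -> R) : R :=
  RInt_gen f (Rbar_locally m_infty) (Rbar_locally p_infty).

Lemma CS_zero f K t : CS f K -> t < - K \/ K < t -> f t = 0.
Proof.
  intros [_ [HK H]] Ht. apply H.
  destruct Ht. rewrite Rabs_left by lra. lra. rewrite Rabs_right by lra. lra.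
Qed.

Lemma I_valK f K K' : CS f K -> K <= K' -> Ig f = RInt f (- K') K'.
Proof.
  intros Hf HK. destruct Hf as [Hc [HK0 Hz]] eqn:E.
  unfold Ig. rewrite (I_val_eq f (-K) K Hc).
  symmetry. apply (zero_outside_RInt f (-K) K Hc). 
  intros t Ht; apply (CS_zero f K t Hf Ht). lra. lra. lra.
  intros t Ht; apply (CS_zero f K t Hf Ht). lra.
Qed.

Lemma RInt_shift (f : R -> R) (Hc : forall t, continuous f t) x y v :
  RInt (fun t => f (t + v)) x y = RInt f (x + v) (y + v).
Proof.
  assert (H := RInt_comp_lin f 1 v x y).
  rewrite !Rmult_1_l in H. rewrite <- H by apply cont_ex_RInt, Hc.
  apply RInt_ext. intros t _. unfold scal; simpl; unfold mult; simpl.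
  rewrite !Rmult_1_l. reflexivity.
Qed.

Lemma CS_shift f K v : CS f K -> CS (fun t => f (t + v)) (K + Rabs v).
Proof.
  intros [Hc [HK Hz]]. split; [|split].
  - intros t. apply (continuous_comp (fun t => t + v) f).
    apply (continuous_plus (fun t : R => t) (fun _ => v)).
    apply continuous_id. apply continuous_const. apply Hc.
  - assert (0 <= Rabs v) by apply Rabs_pos. lra.
  - intros t Ht. apply Hz.
    assert (H1 := Rabs_triang_inv t (-v)). replace (t - - v) with (t + v) in H1 by ring.
    rewrite Rabs_Ropp in H1. lra.
Qed.

Lemma I_shift f K v : CS f K -> Ig (fun t => f (t + v)) = Ig f.
Proof.
  intros Hf.
  assert (Hs := CS_shift f K v Hf).
  assert (Hv := Rabs_pos v).
  rewrite (I_valK _ _ (K + Rabs v) Hs) by lra.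
  rewrite (I_valK _ _ K Hf) by lra.
  destruct Hf as [Hc [HK Hz]] eqn:E.
  rewrite RInt_shift by exact Hc.
  apply (zero_outside_RInt f (-K) K Hc).
  intros t Ht; apply (CS_zero f K t Hf Ht). lra.
  destruct (Rle_dec 0 v). rewrite Rabs_right in * by lra. lra.
  rewrite Rabs_left in * by lra. lra.
  destruct (Rle_dec 0 v). rewrite Rabs_right in * by lra. lra.
  rewrite Rabs_left in * by lra. lra.
Qed.

Lemma CS_minus f g K1 K2 : CS f K1 -> CS g K2 ->
  CS (fun t => f t - g t) (Rmax K1 K2).
Proof.
  intros [Hc1 [HK1 Hz1]] [Hc2 [HK2 Hz2]]. split; [|split].
  - intros t. apply (continuous_minus f g); auto.
  - apply Rle_trans with K1; auto. apply Rmax_l.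
  - intros t Ht. rewrite Hz1, Hz2. ring.
    apply Rle_lt_trans with (Rmax K1 K2); auto. apply Rmax_r.
    apply Rle_lt_trans with (Rmax K1 K2); auto. apply Rmax_l.
Qed.

Lemma I_minus f g K1 K2 : CS f K1 -> CS g K2 ->
  Ig (fun t => f t - g t) = Ig f - Ig g.
Proof.
  intros Hf Hg.
  set (K := Rmax K1 K2).
  rewrite (I_valK _ _ K (CS_minus f g K1 K2 Hf Hg)) by apply Rle_refl.
  rewrite (I_valK _ _ K Hf) by apply Rmax_l.
  rewrite (I_valK _ _ K Hg) by apply Rmax_r.
  destruct Hf as [Hc1 _], Hg as [Hc2 _].
  exact (RInt_minus (V:=R_CompleteNormedModule) f g (-K) K (cont_ex_RInt f Hc1 _ _) (cont_ex_RInt g Hc2 _ _)).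
Qed.

Lemma FTC0 (g : R -> R) (Hc : forall t, continuous g t) u :
  is_derive (fun u => RInt g 0 u) u (g u).
Proof.
  apply (is_derive_RInt g (fun u => RInt g 0 u) 0).
  exists (mkposreal 1 Rlt_0_1). intros y _.
  apply (RInt_correct (V:=R_CompleteNormedModule)), cont_ex_RInt, Hc.
  apply Hc.
Qed.

Lemma RInt_tail (g : R -> R) (Hc : forall t, continuous g t) B0 y :
  (forall t, B0 < t -> g t = 0) -> B0 <= y -> RInt g 0 y = RInt g 0 B0.
Proof.
  intros Hz Hy.
  rewrite <- (RInt_Chasles g 0 B0 y) by apply cont_ex_RInt, Hc.
  rewrite (RInt_zero_ext g B0 y). change (RInt g 0 B0 + 0 = RInt g 0 B0). ring.
  intros t Ht. apply Hz. rewrite Rmin_left in Ht by lra. lra.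
Qed.

Lemma CS_is f K : CS f K ->
  is_RInt_gen f (Rbar_locally m_infty) (Rbar_locally p_infty) (Ig f).
Proof.
  intros Hf. rewrite (I_valK f K K Hf) by apply Rle_refl.
  destruct Hf as [Hc [HK Hz]] eqn:E.
  apply (I_val f (-K) K Hc). intros t Ht; apply (CS_zero f K t Hf Ht). lra.
Qed.

Lemma c2d_gen (k : R -> R -> R) (Hk : forall u v, continuity_2d_pt k u v)
  (F : R -> R -> R) c0 c1 c2 d0 d1 d2 :
  (forall x y, F x y = k (c0 + c1*x + c2*y) (d0 + d1*x + d2*y)) ->
  forall x y, continuity_2d_pt F x y.
Proof.
  intros HF x y. apply continuity_2d_pt_ext with
    (fun x y => k (c0 + c1*x + c2*y) (d0 + d1*x + d2*y)).
  intros; symmetry; apply HF. apply c2d_comp_affine; auto.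
Qed.

Lemma Rabs_ge_sub (x y : R) : Rabs x - Rabs y <= Rabs (x + y).
Proof.
  assert (H := Rabs_triang_inv x (-y)). rewrite Rabs_Ropp in H.
  replace (x - - y) with (x + y) in H by ring. exact H.
Qed.

Section Key.
Variable k : R -> R -> R.
Hypothesis Hk : forall u v, continuity_2d_pt k u v.
Variable r : R.
Hypothesis Hr : 0 <= r.
Hypothesis Hsupp : forall u v, r < Rabs u \/ r < Rabs v -> k u v = 0.
Variables a b : R.
Hypothesis Ha : a <> 0.
Variable s0 : R.

Let A := Rabs a.
Let HA : 0 < A. Proof. apply Rabs_pos_lt, Ha. Qed.
Let T := (Rabs s0 + 2 + r) / A.
Let T1 : T - 1 / A = (Rabs s0 + 1 + r) / A.
Proof. unfold T. field. apply Rgt_not_eq, HA. Qed.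
Let T1pos : 0 < T - 1 / A.
Proof. rewrite T1. apply Rdiv_lt_0_compat. assert (H := Rabs_pos s0). lra. exact HA. Qed.
Let Tpos : 0 <= T.
Proof. assert (0 < 1 / A) by (apply Rdiv_lt_0_compat; lra). lra. Qed.

Definition g (s t sg : R) := k (s + sg * a) (t + sg * b).

Lemma g_c2d s : forall t sg, continuity_2d_pt (fun t sg => g s t sg) t sg.
Proof. apply (c2d_gen k Hk _ s 0 a 0 1 b). intros; unfold g; f_equal; ring. Qed.

Lemma g_cont s t : forall sg, continuous (g s t) sg.
Proof. intros sg. apply (c2d_slice2 (fun t sg => g s t sg)). apply g_c2d. Qed.

Lemma F1 s t sg : Rabs (s - s0) <= 1 -> T - 1 / A < sg -> g s t sg = 0.
Proof.
  intros Hs Hsg. unfold g. apply Hsupp. left.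
  rewrite T1 in Hsg.
  assert (H1 : Rabs s0 + 1 + r < sg * A).
  { apply (Rmult_lt_compat_r A) in Hsg; auto.
    unfold Rdiv in Hsg. rewrite Rmult_assoc, Rinv_l in Hsg by lra. lra. }
  assert (Hsgp : 0 < sg). { assert (0 < sg * A) by (assert (H := Rabs_pos s0); lra).
    destruct (Rle_dec sg 0); auto. nra. lra. }
  assert (H2 := Rabs_ge_sub (sg * a) s).
  rewrite Rabs_mult, (Rabs_right sg) in H2 by lra. fold A in H2.
  assert (H3 := Rabs_ge_sub s0 (s - s0)). replace (s0 + (s - s0)) with s in H3 by ring.
  assert (H4 := Rabs_triang s0 (s - s0)). replace (s0 + (s - s0)) with s in H4 by ring.
  rewrite Rplus_comm. lra.
Qed.

Definition Xk0 s t := RInt (g s t) 0 T.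

Lemma F3 s t : Rabs (s - s0) <= 1 ->
  RInt_gen (fun sg => k (s + sg * a) (t + sg * b)) (at_point 0) (Rbar_locally p_infty)
  = Xk0 s t.
Proof.
  intros Hs. apply (I0_val (g s t) T (g_cont s t)); auto.
  intros sg Hsg. apply F1; auto. assert (0 < 1 / A) by (apply Rdiv_lt_0_compat; lra). lra.
Qed.

Lemma F4 s : Rabs (s - s0) <= 1 -> CS (Xk0 s) (r + T * Rabs b).
Proof.
  intros Hs. split; [|split].
  - intros t. unfold Xk0. apply (PC (g s)). apply g_c2d.
  - assert (H := Rabs_pos b). nra.
  - intros t Ht. unfold Xk0. apply RInt_zero_ext.
    rewrite Rmin_left, Rmax_right by lra. intros sg Hsg.
    unfold g. apply Hsupp. right.
    assert (H2 := Rabs_ge_sub t (sg * b)).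
    rewrite Rabs_mult, (Rabs_right sg) in H2 by lra.
    assert (H := Rabs_pos b). nra.
Qed.

Definition Psi dl t := RInt (g s0 t) 0 dl.

Lemma F5 dl : CS (Psi dl) (r + Rabs dl * Rabs b).
Proof.
  split; [|split].
  - intros t. unfold Psi. apply (PC (g s0)). apply g_c2d.
  - assert (H := Rabs_pos b). assert (H' := Rabs_pos dl). nra.
  - intros t Ht. unfold Psi. apply RInt_zero_ext.
    intros sg Hsg.
    assert (Hsd : Rabs sg <= Rabs dl).
    { destruct (Rle_dec 0 dl).
      rewrite Rmin_left, Rmax_right in Hsg by lra.
      rewrite !Rabs_right by lra. lra.
      rewrite Rmin_right, Rmax_left in Hsg by lra.
      rewrite !Rabs_left by lra. lra. }
    unfold g. apply Hsupp. right.
    assert (H2 := Rabs_ge_sub t (sg * b)).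
    rewrite Rabs_mult in H2.
    assert (H := Rabs_pos b). assert (H' := Rabs_pos sg). nra.
Qed.

Lemma F6 dl t : Rabs dl <= 1 / A ->
  Xk0 (s0 + a * dl) (t + dl * b) = Xk0 s0 t - Psi dl t.
Proof.
  intros Hd. unfold Xk0, Psi.
  rewrite (RInt_ext _ (fun sg => g s0 t (sg + dl))).
  2:{ intros x _. unfold g. f_equal; ring. }
  rewrite (RInt_shift (g s0 t) (g_cont s0 t)). rewrite Rplus_0_l.
  assert (Hc : plus (RInt (g s0 t) 0 dl) (RInt (g s0 t) dl (T + dl)) = RInt (g s0 t) 0 (T + dl)).
  { apply RInt_Chasles; apply cont_ex_RInt, g_cont. }
  change (RInt (g s0 t) 0 dl + RInt (g s0 t) dl (T + dl) = RInt (g s0 t) 0 (T + dl)) in Hc.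
  assert (Hz : forall sg, T - 1 / A < sg -> g s0 t sg = 0).
  { intros; apply F1; auto. rewrite Rminus_diag, Rabs_R0; lra. }
  assert (E1 := RInt_tail (g s0 t) (g_cont s0 t) (T - 1/A) (T + dl) Hz).
  assert (E2 := RInt_tail (g s0 t) (g_cont s0 t) (T - 1/A) T Hz).
  assert (Hdl : - (1 / A) <= dl).
  { destruct (Rle_dec 0 dl). assert (0 < 1/A) by (apply Rdiv_lt_0_compat; lra). lra.
    rewrite Rabs_left in Hd by lra. lra. }
  rewrite E1 in Hc by lra. rewrite E2 by (assert (0 < 1/A) by (apply Rdiv_lt_0_compat; lra); lra).
  lra.
Qed.


Definition G s := Ig (fun t => RInt_gen (fun sg => k (s + sg * a) (t + sg * b))
                        (at_point 0) (Rbar_locally p_infty)).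

Lemma F7 dl : Rabs dl <= 1 / A -> G (s0 + a * dl) = G s0 - Ig (Psi dl).
Proof.
  intros Hd.
  assert (Hs : Rabs (s0 + a * dl - s0) <= 1).
  { replace (s0 + a * dl - s0) with (a * dl) by ring. rewrite Rabs_mult. fold A.
    apply Rmult_le_compat_l with (r := A) in Hd; [|lra].
    replace (A * (1 / A)) with 1 in Hd by (field; lra). exact Hd. }
  assert (Hs0 : Rabs (s0 - s0) <= 1) by (rewrite Rminus_diag, Rabs_R0; lra).
  unfold G.
  assert (E1 : (fun t => RInt_gen (fun sg => k (s0 + a * dl + sg * a) (t + sg * b))
                 (at_point 0) (Rbar_locally p_infty)) = Xk0 (s0 + a * dl)).
  { apply functional_extensionality; intros; apply F3; auto. }
  assert (E0 : (fun t => RInt_gen (fun sg => k (s0 + sg * a) (t + sg * b))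
                 (at_point 0) (Rbar_locally p_infty)) = Xk0 s0).
  { apply functional_extensionality; intros; apply F3; auto. }
  rewrite E1, E0.
  rewrite <- (I_shift (Xk0 (s0 + a * dl)) _ (dl * b) (F4 _ Hs)).
  rewrite (f_equal Ig (functional_extensionality _ _ (fun t => F6 dl t Hd))).
  apply (I_minus _ _ _ _ (F4 s0 Hs0) (F5 dl)).
Qed.

Let K2 := r + Rabs b / A.
Definition Phi dl := RInt (Psi dl) (- K2) K2.

Lemma F8 dl : Rabs dl <= 1 / A -> Ig (Psi dl) = Phi dl.
Proof.
  intros Hd. apply (I_valK _ _ K2 (F5 dl)). unfold K2.
  assert (H := Rabs_pos b).
  apply Rplus_le_compat_l.
  apply Rmult_le_compat_r with (r := Rabs b) in Hd; auto.
  replace (Rabs b / A) with (1 / A * Rabs b) by (field; lra). exact Hd.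
Qed.

Lemma F9 : is_derive Phi 0 (Ig (fun t => k s0 t)).
Proof.
  unfold Phi.
  assert (HD : forall u t, Derive (fun z => Psi z t) u = g s0 t u).
  { intros; apply is_derive_unique; unfold Psi; apply FTC0, g_cont. }
  assert (Hval : Ig (fun t => k s0 t) = RInt (fun t => Derive (fun u => Psi u t) 0) (- K2) K2).
  { rewrite (RInt_ext _ (fun t => k s0 t)).
    2:{ intros; rewrite HD; unfold g; f_equal; ring. }
    apply (I_valK _ r).
    { split; [|split].
      - intros t. apply (c2d_slice2 k). apply Hk.
      - exact Hr.
      - intros t Ht. apply Hsupp. right. exact Ht. }
    unfold K2. assert (0 <= Rabs b / A) by (apply Rdiv_le_0_compat; [apply Rabs_pos | lra]). lra. }
  rewrite Hval. apply (is_derive_RInt_param (fun u t => Psi u t)).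
  - exists (mkposreal 1 Rlt_0_1). intros y _ t _. exists (g s0 t y). unfold Psi. apply FTC0, g_cont.
  - intros t _. apply continuity_2d_pt_ext with (fun u v => g s0 v u).
    intros; symmetry; apply HD.
    apply (c2d_gen k Hk _ s0 a 0 0 b 1). intros; unfold g; f_equal; ring.
  - exists (mkposreal 1 Rlt_0_1). intros y _. apply cont_ex_RInt. apply (F5 y).
Qed.

Lemma key_deriv : is_derive G s0 (- Ig (fun t => k s0 t) / a).
Proof.
  apply is_derive_ext_loc with (fun s => G s0 - Phi ((s - s0) / a)).
  - exists (mkposreal 1 Rlt_0_1). intros s Hs. change (Rabs (s - s0) < 1) in Hs.
    assert (Hd : Rabs ((s - s0) / a) <= 1 / A).
    { unfold Rdiv. rewrite Rabs_mult, Rabs_inv. fold A.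
      apply Rmult_le_compat_r. left; apply Rinv_0_lt_compat; lra. lra. }
    rewrite <- F8, <- F7 by exact Hd. f_equal. field. exact Ha.
  - assert (Hc : is_derive (fun s => (s - s0) / a) s0 (1 / a)).
    { auto_derive. auto. field. exact Ha. }
    assert (HP : is_derive Phi ((s0 - s0) / a) (Ig (fun t => k s0 t))).
    { replace ((s0 - s0) / a) with 0 by (field; exact Ha). apply F9. }
    assert (Hcomp := is_derive_comp Phi (fun s => (s - s0) / a) s0 _ _ HP Hc).
    assert (Hm := is_derive_minus (fun _ => G s0) _ s0 _ _ (is_derive_const (G s0) s0) Hcomp).
    replace (- Ig (fun t => k s0 t) / a)
      with (minus zero (scal (1 / a) (Ig (fun t => k s0 t)))).
    exact Hm.
    unfold minus, zero, scal, plus, opp, mult; simpl. unfold mult; simpl. field. exact Ha.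
Qed.

Lemma G_is : is_RInt_gen (fun t => RInt_gen (fun sg => k (s0 + sg * a) (t + sg * b))
                 (at_point 0) (Rbar_locally p_infty)) (Rbar_locally m_infty) (Rbar_locally p_infty) (G s0).
Proof.
  assert (Hs0 : Rabs (s0 - s0) <= 1) by (rewrite Rminus_diag, Rabs_R0; lra).
  unfold G.
  assert (E0 : (fun t => RInt_gen (fun sg => k (s0 + sg * a) (t + sg * b))
                 (at_point 0) (Rbar_locally p_infty)) = Xk0 s0).
  { apply functional_extensionality; intros; apply F3; auto. }
  rewrite E0. apply (CS_is _ _ (F4 s0 Hs0)).
Qed.

End Key.

Definition Pl (psi : R * R) (u v : R) : R * R := vadd (vscal u psi) (vscal v (perp psi)).

Lemma unit_eq psi : is_unit psi -> fst psi * fst psi + snd psi * snd psi = 1.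
Proof. unfold is_unit, dot. auto. Qed.

Lemma P_shift psi gm (Hu : is_unit psi) s t sg :
  vadd (Pl psi s t) (vscal sg gm) = Pl psi (s + sg * dot psi gm) (t + sg * dot gm (perp psi)).
Proof.
  apply unit_eq in Hu. destruct psi as [p1 p2], gm as [g1 g2].
  unfold Pl, vadd, vscal, perp, dot in *; simpl in *. f_equal.
  - transitivity (s * p1 + t * - p2 + sg * g1 * (p1 * p1 + p2 * p2)). rewrite Hu; ring. ring.
  - transitivity (s * p2 + t * p1 + sg * g2 * (p1 * p1 + p2 * p2)). rewrite Hu; ring. ring.
Qed.

Lemma P_norm psi (Hu : is_unit psi) u v : dot (Pl psi u v) (Pl psi u v) = u * u + v * v.
Proof.
  apply unit_eq in Hu. destruct psi as [p1 p2].
  unfold Pl, vadd, vscal, perp, dot in *; simpl in *.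
  transitivity ((u * u + v * v) * (p1 * p1 + p2 * p2)). ring. rewrite Hu; ring.
Qed.

Lemma cont_pair_comp (h : R * R -> R) (Hc : forall p, continuous h p)
  (A B : R * R -> R) z : continuous A z -> continuous B z ->
  continuous (fun z => h (A z, B z)) z.
Proof.
  intros HA HB.
  apply (continuous_comp_2 A B (fun p q => h (p, q))); auto.
  apply (continuous_ext h). intros [x y]; reflexivity. apply Hc.
Qed.

Lemma k_c2d (h : R * R -> R) (Hc : forall p, continuous h p) psi u v :
  continuity_2d_pt (fun u v => h (Pl psi u v)) u v.
Proof.
  apply continuity_2d_pt_filterlim.
  destruct psi as [p1 p2].
  change (continuous (fun z : R * R => h (Pl (p1, p2) (fst z) (snd z))) (u, v)).
  apply (continuous_ext (fun z => h (0 + p1 * fst z + (- p2) * snd z, 0 + p2 * fst z + p1 * snd z))).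
  { intros [x y]. unfold Pl, vadd, vscal, perp; simpl. f_equal. f_equal; ring. }
  apply cont_pair_comp; auto; apply cont_affine2.
Qed.

Lemma k_supp (h : R * R -> R) r0 (Hz : forall x, r0 < vnorm x -> h x = 0) psi (Hu : is_unit psi) u v :
  Rmax r0 0 < Rabs u \/ Rmax r0 0 < Rabs v -> h (Pl psi u v) = 0.
Proof.
  intros H. apply Hz. unfold vnorm. rewrite P_norm by exact Hu.
  assert (H0 := Rmax_l r0 0).
  destruct H as [H|H].
  - apply Rlt_le_trans with (Rabs u). lra. rewrite <- sqrt_Rsqr_abs. apply sqrt_le_1_alt.
    unfold Rsqr. assert (0 <= v * v) by nra. lra.
  - apply Rlt_le_trans with (Rabs v). lra. rewrite <- sqrt_Rsqr_abs. apply sqrt_le_1_alt.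
    unfold Rsqr. assert (0 <= u * u) by nra. lra.
Qed.

Lemma Radon_X (h : R * R -> R) psi gm (Hu : is_unit psi) s :
  Radon (Xray gm h) psi s = G (fun u v => h (Pl psi u v)) (dot psi gm) (dot gm (perp psi)) s.
Proof.
  unfold Radon, G, Ig. f_equal. apply functional_extensionality. intros t.
  unfold Xray. f_equal. apply functional_extensionality. intros sg.
  f_equal. apply (P_shift psi gm Hu).
Qed.

Lemma one_term (h : R * R -> R) (Hc : forall p, continuous h p) r0
  (Hz : forall x, r0 < vnorm x -> h x = 0) psi gm (Hu : is_unit psi) (Ha : dot psi gm <> 0) s :
  is_RInt_gen (fun t => Xray gm h (Pl psi s t)) (Rbar_locally m_infty) (Rbar_locally p_infty)
     (Radon (Xray gm h) psi s) /\
  is_derive (fun s => Radon (Xray gm h) psi s) s (- Radon h psi s / dot psi gm).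
Proof.
  set (k := fun u v => h (Pl psi u v)).
  assert (Hk : forall u v, continuity_2d_pt k u v) by (intros; apply k_c2d; auto).
  assert (Hr : 0 <= Rmax r0 0) by apply Rmax_r.
  assert (Hs : forall u v, Rmax r0 0 < Rabs u \/ Rmax r0 0 < Rabs v -> k u v = 0)
    by (intros; apply (k_supp h r0 Hz psi Hu); auto).
  split.
  - rewrite Radon_X by exact Hu.
    assert (E : (fun t => Xray gm h (Pl psi s t)) =
       (fun t => RInt_gen (fun sg => k (s + sg * dot psi gm) (t + sg * dot gm (perp psi)))
                 (at_point 0) (Rbar_locally p_infty))).
    { apply functional_extensionality. intros t. unfold Xray. f_equal.
      apply functional_extensionality. intros sg. unfold k. f_equal. apply P_shift; auto. }
    rewrite E. apply (G_is k Hk (Rmax r0 0) Hr Hs _ _ Ha s).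
  - apply (is_derive_ext (G k (dot psi gm) (dot gm (perp psi)))).
    intros; symmetry; apply Radon_X; auto.
    apply (key_deriv k Hk (Rmax r0 0) Hr Hs _ _ Ha s).
Qed.

Lemma CS_slice (h : R * R -> R) (Hc : forall p, continuous h p) r0
  (Hz : forall x, r0 < vnorm x -> h x = 0) psi (Hu : is_unit psi) s :
  CS (fun t => h (Pl psi s t)) (Rmax r0 0).
Proof.
  split; [|split].
  - intros t. apply (c2d_slice2 (fun u v => h (Pl psi u v))). apply k_c2d; auto.
  - apply Rmax_r.
  - intros t Ht. apply (k_supp h r0 Hz psi Hu). right; auto.
Qed.

Lemma I_lin2 F1 F2 K x y : CS F1 K -> CS F2 K ->
  Ig (fun t => F1 t * x + F2 t * y) = Ig F1 * x + Ig F2 * y.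
Proof.
  intros H1 H2.
  assert (E : (fun t => F1 t * x + F2 t * y) = (fun t => plus (scal x (F1 t)) (scal y (F2 t)))).
  { apply functional_extensionality; intros t. unfold plus, scal; simpl; unfold mult; simpl; ring. }
  assert (E2 : Ig F1 * x + Ig F2 * y = plus (scal x (Ig F1)) (scal y (Ig F2))).
  { unfold plus, scal; simpl; unfold mult; simpl; ring. }
  rewrite E, E2. unfold Ig at 1.
  apply (is_RInt_gen_unique (V:=R_CompleteNormedModule)).
  apply (is_RInt_gen_plus (V:=R_NormedModule)).
  apply (is_RInt_gen_scal (V:=R_NormedModule)). apply (CS_is F1 K H1).
  apply (is_RInt_gen_scal (V:=R_NormedModule)). apply (CS_is F2 K H2).
Qed.

Lemma is_sum_gen (m : nat) (F : nat -> R -> R) (l : nat -> R) :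
  (forall i, (i < m)%nat -> is_RInt_gen (F i) (Rbar_locally m_infty) (Rbar_locally p_infty) (l i)) ->
  is_RInt_gen (fun t => sumR m (fun i => F i t)) (Rbar_locally m_infty) (Rbar_locally p_infty) (sumR m l).
Proof.
  induction m as [|m IH]; intros H.
  - simpl.
    assert (Hz : CS (fun _ => 0) 0).
    { split; [|split]. intros; apply continuous_const. lra. auto. }
    assert (E0 : Ig (fun _ => 0) = 0).
    { rewrite (I_valK _ 0 0 Hz) by lra. apply RInt_zero_ext. auto. }
    pose proof (CS_is _ _ Hz) as HH. rewrite E0 in HH. exact HH.
  - simpl. apply (is_RInt_gen_plus (fun t => sumR m (fun i => F i t)) (F m)).
    apply IH. intros; apply H; auto. apply H; auto.
Qed.

Lemma deriv_sum (m : nat) (F : nat -> R -> R) (d : nat -> R) x :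
  (forall i, (i < m)%nat -> is_derive (F i) x (d i)) ->
  is_derive (fun y => sumR m (fun i => F i y)) x (sumR m d).
Proof.
  induction m as [|m IH]; intros H.
  - simpl. apply (is_derive_const 0 x).
  - simpl. apply (is_derive_plus (fun y => sumR m (fun i => F i y)) (F m)).
    apply IH. intros; apply H; auto. apply H; auto.
Qed.

Lemma fst_vsum m F : fst (vsum m F) = sumR m (fun i => fst (F i)).
Proof. induction m; simpl; auto. rewrite IHm. reflexivity. Qed.
Lemma snd_vsum m F : snd (vsum m F) = sumR m (fun i => snd (F i)).
Proof. induction m; simpl; auto. rewrite IHm. reflexivity. Qed.

Lemma sum_alg m (c a x y : nat -> R) R1 R2 :
  sumR m (fun i => c i * (- (R1 * x i + R2 * y i) / a i)) =
  - sumR m (fun i => c i / a i * x i) * R1 + - sumR m (fun i => c i / a i * y i) * R2.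
Proof. induction m; simpl. ring. rewrite IHm. unfold Rdiv; ring. Qed.

Lemma sumR_ext m (F G : nat -> R) : (forall i, F i = G i) -> sumR m F = sumR m G.
Proof. intros H; induction m; simpl; auto. rewrite IHm, H. reflexivity. Qed.

Lemma sum_opp m (z y : nat -> R) :
  sumR m (fun i => z i * - y i) = - sumR m (fun i => z i * y i).
Proof. induction m; simpl. ring. rewrite IHm. ring. Qed.

Lemma mat_alg g1 g2 v1 v2 : (g1, g2) <> (0, 0) ->
  mulmv (inv2 (mat2_of_rows (g1, g2) (perp (g1, g2)))) (g1 * v1 + g2 * v2, - g2 * v1 + g1 * v2)
  = (v1, v2).
Proof.
  intros Hg.
  assert (Hd : g1 * g1 - g2 * - g2 <> 0).
  { intros H. apply Hg. assert (g1 = 0) by nra. assert (g2 = 0) by nra. subst; auto. }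
  unfold mulmv, inv2, mat2_of_rows, det2, perp, dot; simpl.
  f_equal; field; exact Hd.
Qed.

Lemma dot_cont (f : R * R -> R * R)
  (Hc1 : forall p, continuous (fun x => fst (f x)) p)
  (Hc2 : forall p, continuous (fun x => snd (f x)) p) w :
  forall p, continuous (fun y => dot (f y) w) p.
Proof.
  intros p. unfold dot.
  apply (continuous_plus (fun y => fst (f y) * fst w) (fun y => snd (f y) * snd w)).
  apply (continuous_mult (fun y => fst (f y)) (fun _ => fst w)). apply Hc1. apply continuous_const.
  apply (continuous_mult (fun y => snd (f y)) (fun _ => snd w)). apply Hc2. apply continuous_const.
Qed.

Theorem theorem7
  (rho : R) (Hrho : 0 < rho)
  (f : R * R -> R * R)
  (Hf1 : C2c_disc rho (fun x => fst (f x)))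
  (Hf2 : C2c_disc rho (fun x => snd (f x)))
  (m : nat) (gam : nat -> R * R) (c : nat -> R)
  (Hunit : forall i, (i < m)%nat -> is_unit (gam i))
  (Hdist : forall i j, (i < m)%nat -> (j < m)%nat -> i <> j -> gam i <> gam j)
  (Hc : forall i, (i < m)%nat -> c i <> 0)
  (psi : R * R) (Hpsi : is_unit psi)
  (HZ1 : ~ in_Z1 m gam psi) (HZ2 : ~ in_Z2 m c gam psi)
  (s : R) :
  exists d1 d2 : R,
    is_derive (fun s' => fst (RadonV (star m c gam f) psi s')) s d1 /\
    is_derive (fun s' => snd (RadonV (star m c gam f) psi s')) s d2 /\
    mulmv (Qmat m c gam psi) (d1, d2) = RadonV f psi s.
Proof.
  destruct Hf1 as [[[_ Hc1'] _] [r1 [_ Hz1]]].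
  destruct Hf2 as [[[_ Hc2'] _] [r2 [_ Hz2]]].
  assert (Hc1 : forall p, continuous (fun x => fst (f x)) p) by (intros; apply Hc1').
  assert (Hc2 : forall p, continuous (fun x => snd (f x)) p) by (intros; apply Hc2').
  set (r0 := Rmax r1 r2).
  assert (Hz1' : forall x, r0 < vnorm x -> fst (f x) = 0).
  { intros; apply Hz1. assert (H0 := Rmax_l r1 r2). fold r0 in H0. lra. }
  assert (Hz2' : forall x, r0 < vnorm x -> snd (f x) = 0).
  { intros; apply Hz2. assert (H0 := Rmax_r r1 r2). fold r0 in H0. lra. }
  assert (Hwc : forall w p, continuous (fun y => dot (f y) w) p)
    by (intros; apply dot_cont; auto).
  assert (Hwz : forall w x, r0 < vnorm x -> dot (f x) w = 0).
  { intros w x H. unfold dot. rewrite Hz1', Hz2' by exact H. ring. }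
  assert (Ha : forall i, (i < m)%nat -> dot psi (gam i) <> 0).
  { intros i Hi H. apply HZ1. exists i. auto. }
  set (v1 := Radon (fun y => fst (f y)) psi s).
  set (v2 := Radon (fun y => snd (f y)) psi s).
  assert (Hlin : forall w, Radon (fun y => dot (f y) w) psi s = v1 * fst w + v2 * snd w).
  { intros w. unfold v1, v2.
    change (Ig (fun t => fst (f (Pl psi s t)) * fst w + snd (f (Pl psi s t)) * snd w) =
            Ig (fun t => fst (f (Pl psi s t))) * fst w + Ig (fun t => snd (f (Pl psi s t))) * snd w).
    apply (I_lin2 _ _ (Rmax r0 0)).
    apply (CS_slice (fun x => fst (f x)) Hc1 r0 Hz1' psi Hpsi s).
    apply (CS_slice (fun x => snd (f x)) Hc2 r0 Hz2' psi Hpsi s). }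
  assert (Hcomp : forall (pw : nat -> R * R) (sel : R * R -> R),
     (forall x, sel (star m c gam f x) =
        sumR m (fun i => c i * Xray (gam i) (fun y => dot (f y) (pw i)) x)) ->
     is_derive (fun s' => Radon (fun y => sel (star m c gam f y)) psi s') s
       (sumR m (fun i => c i * (- Radon (fun y => dot (f y) (pw i)) psi s / dot psi (gam i))))).
  { intros pw sel Hsel.
    apply (is_derive_ext (fun s' => sumR m (fun i => c i * Radon (Xray (gam i) (fun y => dot (f y) (pw i))) psi s'))).
    - intros s'. symmetry.
      change (Ig (fun t => sel (star m c gam f (Pl psi s' t))) =
              sumR m (fun i => c i * Radon (Xray (gam i) (fun y => dot (f y) (pw i))) psi s')).
      rewrite (functional_extensionality _ _ (fun t => Hsel (Pl psi s' t))).
      unfold Ig. apply (is_RInt_gen_unique (V:=R_CompleteNormedModule)).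
      apply (is_sum_gen m (fun i t => c i * Xray (gam i) (fun y => dot (f y) (pw i)) (Pl psi s' t))).
      intros i Hi.
      apply (is_RInt_gen_scal (V:=R_NormedModule) (fun t => Xray (gam i) (fun y => dot (f y) (pw i)) (Pl psi s' t))).
      apply (one_term _ (Hwc (pw i)) r0 (Hwz (pw i)) psi (gam i) Hpsi (Ha i Hi) s').
    - apply (deriv_sum m (fun i s' => c i * Radon (Xray (gam i) (fun y => dot (f y) (pw i))) psi s')).
      intros i Hi. apply is_derive_scal.
      apply (one_term _ (Hwc (pw i)) r0 (Hwz (pw i)) psi (gam i) Hpsi (Ha i Hi) s). }
  exists (sumR m (fun i => c i * (- Radon (fun y => dot (f y) (gam i)) psi s / dot psi (gam i)))).
  exists (sumR m (fun i => c i * (- Radon (fun y => dot (f y) (perp (gam i))) psi s / dot psi (gam i)))).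
  split; [|split].
  - apply (Hcomp gam fst). intros x. unfold star. rewrite fst_vsum. reflexivity.
  - apply (Hcomp (fun i => perp (gam i)) snd). intros x. unfold star. rewrite snd_vsum. reflexivity.
  - set (S1 := sumR m (fun i => c i / dot psi (gam i) * fst (gam i))).
    set (S2 := sumR m (fun i => c i / dot psi (gam i) * snd (gam i))).
    assert (D1 : sumR m (fun i => c i * (- Radon (fun y => dot (f y) (gam i)) psi s / dot psi (gam i)))
                 = - S1 * v1 + - S2 * v2).
    { rewrite (sumR_ext m _ (fun i => c i * (- (v1 * fst (gam i) + v2 * snd (gam i)) / dot psi (gam i))))
        by (intros; rewrite Hlin; reflexivity).
      apply (sum_alg m c (fun i => dot psi (gam i)) (fun i => fst (gam i)) (fun i => snd (gam i))). }
    assert (D2 : sumR m (fun i => c i * (- Radon (fun y => dot (f y) (perp (gam i))) psi s / dot psi (gam i)))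
                 = - - S2 * v1 + - S1 * v2).
    { rewrite (sumR_ext m _ (fun i => c i * (- (v1 * fst (perp (gam i)) + v2 * snd (perp (gam i))) / dot psi (gam i))))
        by (intros; rewrite Hlin; reflexivity).
      transitivity (- sumR m (fun i => c i / dot psi (gam i) * - snd (gam i)) * v1 + - S1 * v2).
      apply (sum_alg m c (fun i => dot psi (gam i)) (fun i => fst (perp (gam i))) (fun i => snd (perp (gam i)))).
      rewrite (sum_opp m (fun i => c i / dot psi (gam i)) (fun i => snd (gam i))). reflexivity. }
    assert (Hg : gamma_psi m c gam psi = (- S1, - S2)).
    { unfold gamma_psi, vscal. rewrite fst_vsum, snd_vsum. simpl. unfold S1, S2. f_equal; ring. }
    rewrite D1, D2. unfold Qmat. rewrite Hg.
    change (RadonV f psi s) with (v1, v2).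
    apply mat_alg. intros H. apply HZ2. split. exact HZ1. rewrite Hg. exact H.
Qed.
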